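(* For $0<\nu\le1$, the functions $p_*(\nu)$, $\nu h_*(\nu)$ and $\nu h(\mathrm e^{-1}\nu,\nu)$ are strictly increasing in $\nu$, while $h_*(\nu)$ and $h(\mathrm e^{-1}\nu,\nu)$ are strictly decreasing in $\nu$. Moreover, $$\nu h_*(\nu)\le\nu h(\mathrm e^{-1}\nu,\nu)\le(1-\nu+\mathrm e^{-1}\nu^2)^{-1}\le1+(\mathrm e-1)\nu\le\mathrm e.$$
   Context: For $0<\nu\le1$ and $0\le p<1$, let $\beta_p=1-\nu+p\nu$ and, for $p>0$, $h(p,\nu)=[\min\{\beta_p\ln\beta_p^{-1},\,p\ln p^{-1}\}]^{-1}$. Let $p_*(\nu)=\min\{p>0:\beta_p\ge\mathrm e^{-1}\text{ and }p\ln p=\beta_p\ln\beta_p\}$, which is the minimizer of $h(\cdot,\nu)$ over $0<p<1$, and $h_*(\nu)=h(p_*(\nu),\nu)=\min_{0<p<1}h(p,\nu)$. Here $\mathrm e$ is the base of the natural logarithm. *)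

(* Defs.v *)
From Stdlib Require Import Reals ClassicalEpsilon.
Open Scope R_scope.

Definition beta (p nu : R) : R := 1 - nu + p * nu.

Definition h (p nu : R) : R :=
  / Rmin (beta p nu * ln (/ beta p nu)) (p * ln (/ p)).

Definition pstar_set (nu p : R) : Prop :=
  0 < p /\ beta p nu >= exp (-1) /\ p * ln p = beta p nu * ln (beta p nu).

Definition is_pstar (nu p : R) : Prop :=
  pstar_set nu p /\ (forall q, pstar_set nu q -> p <= q).

(* p_*(nu) := min{p > 0 : beta_p >= e^{-1} and p ln p = beta_p ln beta_p}
   (chosen by Hilbert epsilon; it is the minimum whenever the minimum exists). *)
Definition pstar (nu : R) : R := epsilon (inhabits 0) (is_pstar nu).

Definition hstar (nu : R) : R := h (pstar nu) nu.

(* Main.v *)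
Require Import Defs.
From Stdlib Require Import Reals Lra Psatz.
From Coquelicot Require Import Coquelicot.
From Stdlib Require Import ClassicalEpsilon.
Open Scope R_scope.
Lemma exp_pow_n n x : exp (INR n * x) = exp x ^ n.
Proof.
induction n. simpl. rewrite Rmult_0_l. apply exp_0.
rewrite S_INR, Rmult_plus_distr_r, Rmult_1_l, exp_plus, IHn. simpl. ring.
Qed.
Lemma e_lo : 269/100 < exp 1.
Proof.
assert (h : exp 1 = exp (1/64) ^ 64).
{ rewrite <- exp_pow_n. f_equal. replace (INR 64) with 64 by (simpl; ring). field. }
assert (h1 : 1 + 1/64 < exp (1/64)) by (apply exp_ineq1; lra).
assert (h2 : (1 + 1/64) ^ 64 <= exp (1/64) ^ 64).
{ apply pow_incr; lra. }
assert (h3 : 269/100 < (1 + 1/64) ^ 64) by (simpl; lra).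
lra.
Qed.
Lemma ie_lo : 100/274 < exp (-1).
Proof.
assert (h : exp (-1) = exp (-1/64) ^ 64).
{ rewrite <- exp_pow_n. f_equal. replace (INR 64) with 64 by (simpl; ring). field. }
assert (h1 : 1 + (-1/64) < exp (-1/64)) by (apply exp_ineq1; lra).
assert (h2 : (1 + (-1/64)) ^ 64 <= exp (-1/64) ^ 64).
{ apply pow_incr; lra. }
assert (h3 : 100/274 < (1 + (-1/64)) ^ 64) by (simpl; lra).
lra.
Qed.
Lemma e_ie : exp 1 * exp (-1) = 1.
Proof. rewrite <- exp_plus. replace (1 + -1) with 0 by ring. apply exp_0. Qed.
Lemma ie_hi : exp (-1) < 100/269.
Proof. pose proof e_lo. pose proof e_ie. pose proof (exp_pos (-1)). nra. Qed.
Lemma e_hi : exp 1 < 274/100.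
Proof. pose proof ie_lo. pose proof e_ie. pose proof (exp_pos 1). nra. Qed.

Definition F (x : R) := - (x * ln x).

Lemma mvt_incr (G G' : R -> R) a b : a < b ->
  (forall c, a <= c <= b -> is_derive G c (G' c)) ->
  (forall c, a < c < b -> 0 < G' c) -> G a < G b.
Proof.
intros hab hd hp.
destruct (MVT_cor2 G G' a b hab) as [c [hc1 hc2]].
{ intros c hc; apply is_derive_Reals; auto. }
assert (0 < G' c) by (apply hp; lra).
assert (0 < G' c * (b - a)) by (apply Rmult_lt_0_compat; lra). lra.
Qed.

Lemma ln_lt_m1 x : 0 < x -> x <> 1 -> ln x < x - 1.
Proof.
intros hx h1. assert (ln x <> 0).
{ intro H. apply h1. rewrite <- (exp_ln x hx), H. apply exp_0. }
pose proof (exp_ineq1 (ln x) H). rewrite exp_ln in H0; lra.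
Qed.

Lemma ln_ie : ln (exp (-1)) = -1.
Proof. apply ln_exp. Qed.

Lemma ln_lt_ie x : 0 < x -> x < exp (-1) -> ln x < -1.
Proof. intros. rewrite <- ln_ie. apply ln_increasing; auto. Qed.
Lemma ln_gt_ie x : exp (-1) < x -> -1 < ln x.
Proof. intros. rewrite <- ln_ie. apply ln_increasing; auto. apply exp_pos. Qed.

Lemma Fpos x : 0 < x < 1 -> 0 < F x.
Proof.
intros hx. unfold F. assert (ln x < 0).
{ rewrite <- ln_1. apply ln_increasing; lra. }
nra.
Qed.

Lemma hF x : 0 < x -> x * ln (/ x) = F x.
Proof. intros. rewrite ln_Rinv; auto. unfold F; ring. Qed.

Lemma dF x : 0 < x -> is_derive F x (- (ln x + 1)).
Proof. intros hx. unfold F. auto_derive. lra. field. lra. Qed.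

Lemma F_incr x y : 0 < x -> x < y -> y <= exp (-1) -> F x < F y.
Proof.
intros hx hxy hy. apply (mvt_incr F (fun c => - (ln c + 1))); auto.
- intros c hc. apply dF; lra.
- intros c hc. pose proof (ln_lt_ie c ltac:(lra) ltac:(lra)). lra.
Qed.

Lemma F_incr_le x y : 0 < x -> x <= y -> y <= exp (-1) -> F x <= F y.
Proof. intros. destruct (Req_dec x y). subst; lra. left; apply F_incr; lra. Qed.

Lemma F_decr x y : exp (-1) <= x -> x < y -> F y < F x.
Proof.
intros hx hxy. pose proof (exp_pos (-1)).
assert (- F x < - F y); [|lra].
apply (mvt_incr (fun c => - F c) (fun c => ln c + 1)); auto.
- intros c hc. unfold F. auto_derive. lra. field. lra.
- intros c hc. pose proof (ln_gt_ie c ltac:(lra)). lra.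
Qed.

Lemma F_decr_le x y : exp (-1) <= x -> x <= y -> F y <= F x.
Proof. intros. destruct (Req_dec x y). subst; lra. left; apply F_decr; lra. Qed.

(* Q(y) = F y / (1 - y) increasing, cross-multiplied *)
Lemma Q_incr y1 y2 : 0 < y1 -> y1 < y2 -> y2 < 1 ->
  F y1 * (1 - y2) < F y2 * (1 - y1).
Proof.
intros h1 h12 h2.
assert (F y1 / (1 - y1) < F y2 / (1 - y2)).
{ apply (mvt_incr (fun y => F y / (1 - y)) (fun x => (x - 1 - ln x)/(1-x)^2)); auto.
  - intros c hc. unfold F. auto_derive. split. lra. split. lra. auto. field. lra.
  - intros c hc. pose proof (ln_lt_m1 c ltac:(lra) ltac:(lra)).
    apply Rdiv_lt_0_compat. lra. apply pow_lt; lra. }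
apply (Rmult_lt_compat_r ((1 - y1) * (1 - y2))) in H; [|nra].
replace (F y1 / (1 - y1) * ((1 - y1) * (1 - y2))) with (F y1 * (1 - y2)) in H by (field; lra).
replace (F y2 / (1 - y2) * ((1 - y1) * (1 - y2))) with (F y2 * (1 - y1)) in H by (field; lra).
auto.
Qed.

Lemma ie_pos : 0 < exp (-1).
Proof. apply exp_pos. Qed.

Lemma min_elt nu r : 0 < nu -> 0 < r -> r <= exp (-1) -> pstar_set nu r ->
  is_pstar nu r.
Proof.
intros hnu hr hre hs. split; auto.
intros q [hq [hbq heq]].
destruct (Rle_or_lt (exp (-1)) q) as [H|H]; [lra|].
destruct (Rle_or_lt r q) as [H'|H']; auto.
exfalso. destruct hs as [_ [hbr heqr]].
unfold beta in *.
assert (F q < F r) by (apply F_incr; lra).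
assert (F (1 - nu + r * nu) < F (1 - nu + q * nu)) by (apply F_decr; nra).
unfold F in *. lra.
Qed.

Lemma cont_G nu c : 0 < nu -> nu <= 1 -> 0 < c ->
  continuity_pt (fun p => F p - F (beta p nu)) c.
Proof.
intros hnu hnu1 hc. apply derivable_continuous_pt.
exists (- (ln c + 1) - nu * (- (ln (beta c nu) + 1))).
apply is_derive_Reals. unfold F, beta. auto_derive.
- split; [lra| split; [nra|auto]].
- field. split; nra.
Qed.

Lemma pstar_exists nu : 0 < nu -> nu <= 1 -> exists r, is_pstar nu r /\ r <= exp (-1).
Proof.
intros hnu hnu1. pose proof ie_pos. pose proof ie_hi.
destruct (Req_dec nu 1) as [E|E].
{ subst. exists (exp (-1)). split; [|lra]. split.
  - unfold pstar_set, beta. split; auto. replace (1 - 1 + exp (-1) * 1) with (exp (-1)) by ring.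
    split; lra.
  - intros q [_ [hb _]]. unfold beta in hb. lra. }
assert (hA : exists a, 0 < a < exp (-1) /\ exp (-1) <= beta a nu /\
          F a - F (beta a nu) < 0).
{ destruct (Rlt_or_le (1 - exp (-1)) nu) as [C|C].
  - exists (1 - (1 - exp (-1)) / nu).
    assert (hb : beta (1 - (1 - exp (-1)) / nu) nu = exp (-1)) by (unfold beta; field; lra).
    rewrite hb.
    assert (0 < 1 - (1 - exp (-1)) / nu < exp (-1)).
    { split.
      - apply Rlt_0_minus. apply (Rmult_lt_reg_r nu); auto. unfold Rdiv. rewrite Rmult_assoc, Rinv_l; lra.
      - assert ((1 - exp (-1)) / nu > 1 - exp (-1)); [|lra].
        apply (Rmult_lt_reg_r nu); auto. unfold Rdiv. rewrite Rmult_assoc, Rinv_l; nra. }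
    split; auto. split. lra. assert (F (1 - (1 - exp (-1)) / nu) < F (exp (-1))) by (apply F_incr; lra). lra.
  - set (m := F (beta (exp (-1)) nu)).
    assert (hm : 0 < m) by (apply Fpos; unfold beta; nra).
    set (c := Rmin m (exp (-1))).
    assert (hc : 0 < c <= exp (-1)) by (unfold c, Rmin; destruct Rle_dec; lra).
    assert (hcm : c <= m) by (unfold c, Rmin; destruct Rle_dec; lra).
    exists (c * c).
    assert (0 < c * c < exp (-1)) by nra.
    split; auto. split. unfold beta; nra.
    assert (F (beta (exp (-1)) nu) <= F (beta (c * c) nu)) by (apply F_decr_le; unfold beta; nra).
    assert (F c <= F (exp (-1))) by (apply F_incr_le; lra).
    assert (F (c * c) = 2 * c * F c) by (unfold F; rewrite ln_mult; lra).
    assert (F (exp (-1)) = exp (-1)) by (unfold F; rewrite ln_ie; ring).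
    assert (2 * c * F c <= 2 * c * exp (-1)) by (apply Rmult_le_compat_l; lra).
    assert (2 * c * exp (-1) < c) by nra.
    assert (m <= F (beta (c * c) nu)) by exact H2.
    lra. }
destruct hA as [a [ha [hba hGa]]].
assert (hGe : 0 < F (exp (-1)) - F (beta (exp (-1)) nu)).
{ assert (F (beta (exp (-1)) nu) < F (exp (-1))) by (apply F_decr; unfold beta; nra). lra. }
destruct (Ranalysis5.IVT_interv (fun p => F p - F (beta p nu)) a (exp (-1)))
  as [r [hr hGr]]; auto.
{ intros x hx. apply cont_G; lra. }
{ lra. }
exists r. split; [|lra]. apply min_elt; auto; try lra.
split. lra. split. unfold beta in *; nra. unfold F in hGr; lra.
Qed.

Lemma pstar_props nu : 0 < nu -> nu <= 1 ->
  0 < pstar nu /\ pstar nu <= exp (-1) /\ exp (-1) <= beta (pstar nu) nu /\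
  F (pstar nu) = F (beta (pstar nu) nu).
Proof.
intros hnu hnu1. destruct (pstar_exists nu hnu hnu1) as [r [hr hre]].
assert (H : is_pstar nu (pstar nu)).
{ unfold pstar. apply epsilon_spec. exists r; auto. }
destruct H as [[h1 [h2 h3]] hmin].
assert (pstar nu <= r) by (apply hmin; apply hr).
split; auto. split. lra. split. lra. unfold F; lra.
Qed.

Lemma beta_range p nu : 0 < p < 1 -> 0 < nu <= 1 -> p <= beta p nu < 1.
Proof. intros. unfold beta. split; nra. Qed.

Lemma h_eval p nu : 0 < p < 1 -> 0 < nu <= 1 ->
  h p nu = / Rmin (F (beta p nu)) (F p).
Proof.
intros hp hnu. pose proof (beta_range p nu hp hnu).
unfold h. rewrite !hF; auto; lra.
Qed.

Lemma hstar_eq nu : 0 < nu -> nu <= 1 -> hstar nu = / F (pstar nu).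
Proof.
intros hnu hnu1. destruct (pstar_props nu hnu hnu1) as [h1 [h2 [h3 h4]]].
pose proof ie_hi. unfold hstar. rewrite h_eval; try lra.
rewrite <- h4. unfold Rmin. destruct Rle_dec; auto.
Qed.

Lemma hstar_min nu q : 0 < nu -> nu <= 1 -> 0 < q < 1 -> hstar nu <= h q nu.
Proof.
intros hnu hnu1 hq. destruct (pstar_props nu hnu hnu1) as [h1 [h2 [h3 h4]]].
pose proof ie_hi. rewrite hstar_eq, h_eval; auto; try lra.
pose proof (beta_range q nu hq ltac:(lra)).
apply Rinv_le_contravar.
{ unfold Rmin; destruct Rle_dec; apply Fpos; lra. }
destruct (Rle_or_lt q (pstar nu)).
- assert (F q <= F (pstar nu)) by (apply F_incr_le; lra).
  unfold Rmin; destruct Rle_dec; lra.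
- assert (F (beta q nu) <= F (beta (pstar nu) nu)) by (apply F_decr_le; unfold beta in *; nra).
  unfold Rmin; destruct Rle_dec; lra.
Qed.

Lemma lem_div n1 n2 M1 M2 : 0 < M1 -> 0 < M2 -> n1 * M2 < n2 * M1 ->
  n1 * / M1 < n2 * / M2.
Proof.
intros h1 h2 h. replace (n1 * / M1) with ((n1 * M2) * / (M1 * M2)) by (field; lra).
replace (n2 * / M2) with ((n2 * M1) * / (M1 * M2)) by (field; lra).
apply Rmult_lt_compat_r; auto. apply Rinv_0_lt_compat; nra.
Qed.

Lemma min_ineq n1 n2 A1 A2 B1 B2 : 0 <= n1 -> 0 < A1 -> 0 < A2 -> 0 < B1 -> 0 < B2 ->
  n1 * A2 < n2 * A1 -> n1 * B2 < n2 * B1 ->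
  n1 * / Rmin A1 B1 < n2 * / Rmin A2 B2.
Proof.
intros. apply lem_div.
- unfold Rmin; destruct Rle_dec; lra.
- unfold Rmin; destruct Rle_dec; lra.
- unfold Rmin; destruct Rle_dec; destruct Rle_dec; nra.
Qed.

Lemma nuh_incr p n1 n2 : 0 < p < 1 -> 0 < n1 -> n1 < n2 -> n2 <= 1 ->
  n1 * h p n1 < n2 * h p n2.
Proof.
intros hp h1 h12 h2.
pose proof (beta_range p n1 hp ltac:(lra)). pose proof (beta_range p n2 hp ltac:(lra)).
rewrite !h_eval; try lra.
apply min_ineq; try lra; try (apply Fpos; lra).
- assert (F (beta p n2) * (1 - beta p n1) < F (beta p n1) * (1 - beta p n2)).
  { apply Q_incr; unfold beta in *; nra. }
  unfold beta in H1 at 2 4.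
  replace (1 - (1 - n1 + p * n1)) with (n1 * (1 - p)) in H1 by ring.
  replace (1 - (1 - n2 + p * n2)) with (n2 * (1 - p)) in H1 by ring.
  apply (Rmult_lt_reg_r (1 - p)); [lra|]. nra.
- pose proof (Fpos p hp). nra.
Qed.

Lemma E2 s : 0 < s -> 1 + s + s * s / 2 < exp s.
Proof.
intros hs.
assert (exp 0 - 1 - 0 - 0 * 0 / 2 < exp s - 1 - s - s * s / 2); [|rewrite exp_0 in H; lra].
apply (mvt_incr (fun s => exp s - 1 - s - s * s / 2) (fun c => exp c - 1 - c)); auto.
- intros c hc. auto_derive; auto. field.
- intros c hc. pose proof (exp_ineq1 c ltac:(lra)). lra.
Qed.

Lemma E3 s : 0 < s -> exp (- s) < 1 - s + s * s / 2.
Proof.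
intros hs.
assert (1 - 0 + 0 * 0 / 2 - exp (- 0) < 1 - s + s * s / 2 - exp (- s)); [|rewrite Ropp_0, exp_0 in H; lra].
apply (mvt_incr (fun s => 1 - s + s * s / 2 - exp (- s)) (fun c => -1 + c + exp (- c))); auto.
- intros c hc. auto_derive; auto. field.
- intros c hc. pose proof (exp_ineq1 (- c) ltac:(lra)). lra.
Qed.

Lemma E4 s : 0 < s -> 1 - s + s * s / 2 - s * s * s / 6 < exp (- s).
Proof.
intros hs.
assert (exp (- 0) - (1 - 0 + 0 * 0 / 2 - 0 * 0 * 0 / 6) <
        exp (- s) - (1 - s + s * s / 2 - s * s * s / 6)); [|rewrite Ropp_0, exp_0 in H; lra].
apply (mvt_incr (fun s => exp (- s) - (1 - s + s * s / 2 - s * s * s / 6))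
                (fun c => - exp (- c) + (1 - c + c * c / 2))); auto.
- intros c hc. auto_derive; auto. field.
- intros c hc. pose proof (E3 c ltac:(lra)). lra.
Qed.

Lemma psi nu : 0 < nu -> nu <= 1 -> 1 - nu + exp (-1) * nu * nu <= exp (- nu).
Proof.
intros h0 h1. pose proof ie_lo. pose proof ie_hi.
destruct (Rle_or_lt nu (1/2)).
- pose proof (E4 nu h0).
  assert (nu * nu * (1/2 - nu / 6 - exp (-1)) >= 0).
  { apply Rle_ge. apply Rmult_le_pos; nra. }
  nra.
- replace (- nu) with (-1 + (1 - nu)) by ring. rewrite exp_plus.
  destruct (Req_dec nu 1).
  { subst. replace (1 - 1) with 0 by ring. rewrite exp_0. lra. }
  set (s := 1 - nu). pose proof (E2 s ltac:(unfold s; lra)).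
  assert (exp (-1) * (1 + s + s * s / 2) <= exp (-1) * exp s).
  { apply Rmult_le_compat_l; lra. }
  assert (s * (exp (-1) * (3 - s / 2) - 1) >= 0).
  { apply Rle_ge. apply Rmult_le_pos. unfold s; lra. unfold s in *; nra. }
  replace nu with (1 - s) by (unfold s; ring). nra.
Qed.

Lemma phi nu : 0 < nu -> nu <= 1 -> 1 - nu + exp (-1) * nu * nu <= exp (-1) * (1 - ln nu).
Proof.
intros h0 h1. pose proof ie_lo. pose proof ie_hi.
destruct (Req_dec nu 1). { subst. rewrite ln_1. lra. }
set (G := fun x => (1 - x + exp (-1) * x * x) - exp (-1) * (1 - ln x)).
assert (G nu < G 1).
{ apply (mvt_incr G (fun x => -1 + 2 * exp (-1) * x + exp (-1) / x)); try lra.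
  - intros c hc. unfold G. auto_derive. lra. field. lra.
  - intros c hc.
    assert (0 < 2 * exp (-1) * c * c - c + exp (-1)).
    { assert (8 * exp (-1) * exp (-1) - 1 > 0).
      { assert (exp (-1) * exp (-1) > 100/274 * (100/274)) by (apply Rmult_gt_0_lt_compat; lra). lra. }
      assert (HH : 0 < (4 * exp (-1) * c - 1) ^ 2 + 8 * exp (-1) * exp (-1) - 1) by (pose proof (pow2_ge_0 (4 * exp (-1) * c - 1)); lra).
      assert (0 < 8 * exp (-1) * (2 * exp (-1) * c * c - c + exp (-1))) by (ring_simplify in HH; ring_simplify; lra).
      apply (Rmult_lt_reg_l (8 * exp (-1))). lra. lra. }
    replace (-1 + 2 * exp (-1) * c + exp (-1) / c) with ((2 * exp (-1) * c * c - c + exp (-1)) / c) by (field; lra).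
    apply Rdiv_lt_0_compat; lra. }
unfold G in H2. rewrite ln_1 in H2. lra.
Qed.

Lemma Fq n : 0 < n -> F (exp (-1) * n) = exp (-1) * n * (1 - ln n).
Proof. intros. unfold F. rewrite ln_mult, ln_ie; [ring| apply exp_pos | lra]. Qed.

Lemma bq n : beta (exp (-1) * n) n = 1 - n + exp (-1) * n * n.
Proof. unfold beta; ring. Qed.

Lemma bq_range n : 0 < n -> n <= 1 ->
  exp (-1) <= 1 - n + exp (-1) * n * n < 1.
Proof. intros. pose proof ie_hi. pose proof ie_pos. split.
- assert (0 <= (1 - n) * (1 - exp (-1) - exp (-1) * n)) by (apply Rmult_le_pos; nra). nra.
- nra.
Qed.

Lemma lem_div_le n M b : 0 < M -> 0 < b -> n * b <= M -> n * / M <= / b.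
Proof.
intros h1 h2 h. replace (n * / M) with ((n * b) * / (M * b)) by (field; lra).
replace (/ b) with (M * / (M * b)) by (field; lra).
apply Rmult_le_compat_r; auto. left; apply Rinv_0_lt_compat; nra.
Qed.

Theorem lemma12 :
  (forall nu1 nu2 : R, 0 < nu1 -> nu1 < nu2 -> nu2 <= 1 ->
     pstar nu1 < pstar nu2 /\
     nu1 * hstar nu1 < nu2 * hstar nu2 /\
     nu1 * h (exp (-1) * nu1) nu1 < nu2 * h (exp (-1) * nu2) nu2 /\
     hstar nu2 < hstar nu1 /\
     h (exp (-1) * nu2) nu2 < h (exp (-1) * nu1) nu1) /\
  (forall nu : R, 0 < nu -> nu <= 1 ->
     nu * hstar nu <= nu * h (exp (-1) * nu) nu /\
     nu * h (exp (-1) * nu) nu <= / (1 - nu + exp (-1) * nu ^ 2) /\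
     / (1 - nu + exp (-1) * nu ^ 2) <= 1 + (exp 1 - 1) * nu /\
     1 + (exp 1 - 1) * nu <= exp 1).
Proof.
pose proof ie_lo as Hl. pose proof ie_hi as Hh. pose proof e_lo as El. pose proof e_hi as Eh.
pose proof e_ie as Ei.
split.
- intros n1 n2 h1 h12 h2.
  destruct (pstar_props n1 h1 ltac:(lra)) as [t1p [t1e [b1e F1]]].
  destruct (pstar_props n2 ltac:(lra) h2) as [t2p [t2e [b2e F2]]].
  assert (ha : pstar n1 < pstar n2).
  { destruct (Rlt_or_le (pstar n1) (pstar n2)) as [H|H]; auto. exfalso.
    assert (F (pstar n2) <= F (pstar n1)) by (apply F_incr_le; lra).
    assert (beta (pstar n2) n2 < beta (pstar n1) n1) by (unfold beta; nra).
    assert (beta (pstar n1) n1 < 1) by (unfold beta; nra).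
    assert (F (beta (pstar n1) n1) < F (beta (pstar n2) n2)) by (apply F_decr; lra).
    lra. }
  pose proof (bq_range n1 h1 ltac:(lra)) as R1.
  pose proof (bq_range n2 ltac:(lra) h2) as R2.
  assert (hq1 : 0 < exp (-1) * n1 < 1) by nra.
  assert (hq2 : 0 < exp (-1) * n2 < 1) by nra.
  assert (hb21 : 1 - n2 + exp (-1) * n2 * n2 < 1 - n1 + exp (-1) * n1 * n1) by nra.
  assert (hl : ln n1 < ln n2) by (apply ln_increasing; lra).
  assert (hl2 : ln n2 <= 0) by (rewrite <- ln_1; destruct (Req_dec n2 1); [subst; lra| left; apply ln_increasing; lra]).
  split; [auto|]. split; [|split; [|split]].
  + apply Rle_lt_trans with (n1 * h (pstar n2) n1).
    * apply Rmult_le_compat_l. lra. apply hstar_min; lra.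
    * unfold hstar. apply nuh_incr; lra.
  + rewrite !h_eval; try lra. rewrite !bq, !Fq; try lra.
    apply min_ineq; [lra | apply Fpos; lra | apply Fpos; lra | apply Rmult_lt_0_compat; [nra|lra] | apply Rmult_lt_0_compat; [nra|lra] | | ].
    * pose proof (Q_incr (1 - n2 + exp (-1) * n2 * n2) (1 - n1 + exp (-1) * n1 * n1) ltac:(lra) hb21 ltac:(lra)) as Q.
      replace (1 - (1 - n1 + exp (-1) * n1 * n1)) with (n1 * (1 - exp (-1) * n1)) in Q by ring.
      replace (1 - (1 - n2 + exp (-1) * n2 * n2)) with (n2 * (1 - exp (-1) * n2)) in Q by ring.
      set (A1 := F (1 - n1 + exp (-1) * n1 * n1)) in *.
      set (A2 := F (1 - n2 + exp (-1) * n2 * n2)) in *.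
      assert (0 < A1) by (apply Fpos; lra).
      assert (A1 * (n2 * (1 - exp (-1) * n2)) <= A1 * (n2 * (1 - exp (-1) * n1))).
      { apply Rmult_le_compat_l. lra. nra. }
      apply (Rmult_lt_reg_r (1 - exp (-1) * n1)). nra. nra.
    * assert (0 < n1 * (exp (-1) * n2)) by nra.
      replace (n1 * (exp (-1) * n2 * (1 - ln n2))) with ((n1 * (exp (-1) * n2)) * (1 - ln n2)) by ring.
      replace (n2 * (exp (-1) * n1 * (1 - ln n1))) with ((n1 * (exp (-1) * n2)) * (1 - ln n1)) by ring.
      apply Rmult_lt_compat_l; lra.
  + rewrite !hstar_eq; try lra. apply Rinv_lt_contravar.
    apply Rmult_lt_0_compat; apply Fpos; lra.
    apply F_incr; lra.
  + rewrite !h_eval; try lra. rewrite !bq.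
    assert (F (exp (-1) * n1) < F (exp (-1) * n2)) by (apply F_incr; nra).
    assert (F (1 - n1 + exp (-1) * n1 * n1) < F (1 - n2 + exp (-1) * n2 * n2)) by (apply F_decr; lra).
    apply Rinv_lt_contravar.
    { apply Rmult_lt_0_compat; unfold Rmin; destruct Rle_dec; apply Fpos; lra. }
    unfold Rmin; destruct Rle_dec; destruct Rle_dec; lra.
- intros n h0 h1.
  pose proof (bq_range n h0 h1) as R.
  assert (hq : 0 < exp (-1) * n < 1) by nra.
  replace (1 - n + exp (-1) * n ^ 2) with (1 - n + exp (-1) * n * n) by ring.
  split; [|split; [|split]].
  + apply Rmult_le_compat_l. lra. apply hstar_min; lra.
  + rewrite h_eval; try lra. rewrite bq, Fq; try lra.
    set (b := 1 - n + exp (-1) * n * n) in *.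
    apply lem_div_le; try lra.
    { assert (ln n <= 0) by (rewrite <- ln_1; destruct (Req_dec n 1); [subst; lra| left; apply ln_increasing; lra]).
      unfold Rmin; destruct Rle_dec; try (apply Fpos; lra). apply Rmult_lt_0_compat; [nra|lra]. }
    assert (hlb : ln b <= - n).
    { rewrite <- (ln_exp (- n)). pose proof (psi n h0 h1). fold b in H.
      destruct H. left; apply ln_increasing; lra. rewrite H; lra. }
    assert (n * b <= F b) by (unfold F; nra).
    assert (n * b <= exp (-1) * n * (1 - ln n)).
    { pose proof (phi n h0 h1). fold b in H0.
      replace (exp (-1) * n * (1 - ln n)) with (n * (exp (-1) * (1 - ln n))) by ring.
      apply Rmult_le_compat_l; lra. }
    unfold Rmin; destruct Rle_dec; lra.
  + set (b := 1 - n + exp (-1) * n * n) in *.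
    assert (hid : b * (1 + (exp 1 - 1) * n) - 1 =
      n * (1 - n) * (exp 1 - 2 - (1 - exp (-1)) * n) + (exp 1 * exp (-1) - 1) * n ^ 3)
      by (unfold b; ring).
    rewrite Ei in hid.
    assert (0 <= n * (1 - n) * (exp 1 - 2 - (1 - exp (-1)) * n)).
    { apply Rmult_le_pos. nra. nra. }
    assert (1 <= b * (1 + (exp 1 - 1) * n)) by lra.
    replace (1 + (exp 1 - 1) * n) with (/ b * (b * (1 + (exp 1 - 1) * n))) by (field; lra).
    rewrite <- (Rmult_1_r (/ b)) at 1.
    apply Rmult_le_compat_l. left; apply Rinv_0_lt_compat; lra. auto.
  + nra.
Qed.
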